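(* Let $N\in\mathbb{N}$. Let $$\widehat{\mathcal{B}_1'}(N)=\{(q_1',q_2')\in\mathbb{Z}^2 \mid 2q_1'^2+2q_2'^2+q_2'=N\},$$ let $M'=\{(q_1',q_2')\in\mathbb{Z}^2\mid q_1'+q_2'\text{ even}\}$ and $L'=\mathbb{Z}^2$, let $\mathcal{U}(8N+1)=\{(x,y)\in\mathbb{Z}^2\mid x^2+y^2=8N+1\}$, and let $\varphi:\widehat{\mathcal{B}_1'}(N)\to \mathcal{U}(8N+1)$ be the (well-defined) map $\varphi(q_1',q_2')=(4q_1',\,4q_2'+1)$. Let the cyclic group $C_4=\langle r\rangle$ act on $\mathcal{U}(8N+1)$ by $r(x,y)=(-y,x)$. Then: (1) the action of $C_4$ on $\mathcal{U}(8N+1)$ is free; (2) the sets $\varphi(\widehat{\mathcal{B}_1'}(N)\cap M')$ and $\varphi(\widehat{\mathcal{B}_1'}(N)\cap (L'\setminus M'))$ are disjoint, and $\varphi(\widehat{\mathcal{B}_1'}(N))$ is a complete set of representatives of the $C_4$-orbits of $\mathcal{U}(8N+1)$.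
   Context: The expression $2q_1'^2+2q_2'^2+q_2'$ is the $\Lambda_1$-atomic length of the translation $t_q$ in the extended affine Weyl group of type $C_2^{(1)}$, for $q$ in the coweight lattice $L=\{\sqrt2 q_1\varepsilon_1+\sqrt2 q_2\varepsilon_2\mid q_1,q_2\in\frac12\mathbb{Z}\}$, rewritten in the coordinates $(q_1',q_2')=(q_1+q_2,q_1-q_2)$; $M'$ corresponds to the sublattice $M=\sqrt2\mathbb{Z}\varepsilon_1\oplus\sqrt2\mathbb{Z}\varepsilon_2$. *)

(* Defs.v *)
From mathcomp Require Import all_boot all_order all_algebra.
Set Implicit Arguments. Unset Strict Implicit. Unset Printing Implicit Defensive.
Import Order.TTheory GRing.Theory Num.Theory.
Local Open Scope ring_scope.

Definition Bhat (N : nat) (q : int * int) : Prop :=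
  2 * q.1 ^+ 2 + 2 * q.2 ^+ 2 + q.2 = N%:Z.

Definition Mp (q : int * int) : Prop := (2 %| q.1 + q.2)%Z.

Definition U (n : int) (p : int * int) : Prop := p.1 ^+ 2 + p.2 ^+ 2 = n.

Definition phi (q : int * int) : int * int := (4 * q.1, 4 * q.2 + 1).

(* generator r of C_4 : r(x,y) = (-y, x); the element r^k of C_4 = <r>,
   k : 'I_4, acts by iterating r k times. *)
Definition rot (p : int * int) : int * int := (- p.2, p.1).
Definition c4act (k : 'I_4) (p : int * int) : int * int := iter k rot p.

Definition phi_image (S : int * int -> Prop) (v : int * int) : Prop :=
  exists2 q, S q & phi q = v.

(* Main.v *)
Require Import Defs.
From mathcomp Require Import all_boot all_order all_algebra.
From mathcomp Require Import zify ring.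
Import Order.TTheory GRing.Theory Num.Theory.
Local Open Scope ring_scope.

Lemma sq4 (p r : int) : (4 * p + r) ^+ 2 = 8 * (2 * p ^+ 2 + p * r) + r * r.
Proof. ring. Qed.

Lemma key (N : nat) (x y : int) : x ^+ 2 + y ^+ 2 = (8 * N + 1)%:Z ->
  (exists a b, x = 4 * a /\ y = 4 * b + 1) \/
  (exists a b, x = 4 * a /\ y = 4 * b + 3) \/
  (exists a b, y = 4 * a /\ x = 4 * b + 1) \/
  (exists a b, y = 4 * a /\ x = 4 * b + 3).
Proof.
move=> H.
have dx : x = 4 * (x %/ 4)%Z + (x %% 4)%Z by rewrite {1}(divz_eq x 4) mulrC.
have dy : y = 4 * (y %/ 4)%Z + (y %% 4)%Z by rewrite {1}(divz_eq y 4) mulrC.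
have rx0 : 0 <= (x %% 4)%Z by apply: modz_ge0.
have rx1 : (x %% 4)%Z < 4 by apply: (@ltz_pmod x 4).
have ry0 : 0 <= (y %% 4)%Z by apply: modz_ge0.
have ry1 : (y %% 4)%Z < 4 by apply: (@ltz_pmod y 4).
move: H; rewrite dx dy !sq4.
move: (x %/ 4)%Z (x %% 4)%Z (y %/ 4)%Z (y %% 4)%Z rx0 rx1 ry0 ry1 dx dy.
move=> p r s t r0 r1 t0 t1 dx dy.
move: (2 * p ^+ 2 + p * r) (2 * s ^+ 2 + s * t) => A B E.
have Hr : (r = 0 \/ r = 1 \/ r = 2 \/ r = 3) by lia.
have Ht : (t = 0 \/ t = 1 \/ t = 2 \/ t = 3) by lia.
move: E dx dy.
case: Hr => [->|[->|[->|->]]]; case: Ht => [->|[->|[->|->]]] => E dx dy;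
  try (exfalso; lia).
all: first [ by left; exists p, s; split; lia
           | by right; left; exists p, s; split; lia
           | by right; right; left; exists s, p; split; lia
           | by right; right; right; exists s, p; split; lia ].
Qed.

Lemma U_phi (N : nat) q : U (8 * N + 1)%:Z (phi q) <-> Bhat N q.
Proof.
case: q => a b; rewrite /U /Bhat /phi /=.
have -> : (4 * a) ^+ 2 + (4 * b + 1) ^+ 2 = 8 * (2 * a ^+ 2 + 2 * b ^+ 2 + b) + 1 by ring.
move: (2 * a ^+ 2 + 2 * b ^+ 2 + b) => X; split; lia.
Qed.

Theorem theorem8p12 (N : nat) :
  let n := (8 * N + 1)%:Z in
  (* (1) the C_4 action on U(8N+1) is free *)
  (forall u, U n u -> forall k : 'I_4, c4act k u = u -> k = ord0)
  /\
  (* (2a) the two image sets are disjoint *)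
  (forall v, ~ (phi_image (fun q => Bhat N q /\ Mp q) v /\
                phi_image (fun q => Bhat N q /\ ~ Mp q) v))
  /\
  (* phi is well defined: phi(Bhat N) is contained in U(8N+1) *)
  (forall q, Bhat N q -> U n (phi q))
  /\
  (* (2b) every C_4-orbit of U(8N+1) meets phi(Bhat N) in exactly one point *)
  (forall u, U n u ->
     exists! v, phi_image (Bhat N) v /\ exists k : 'I_4, c4act k u = v).
Proof.
move=> n; split; [|split; [|split]].
{ case=> x y Hu k; have := @key N x y Hu.
  case: k => [[|[|[|[|k]]]] Hk] //; first by move=> *; apply: val_inj.
  all: rewrite /c4act /= /Defs.rot /= => HH Hc; case: Hc => e1 e2; exfalso.
  all: case: HH => [[a [b [ea eb]]]|[[a [b [ea eb]]]|[[a [b [ea eb]]]|[a [b [ea eb]]]]]];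
    rewrite ?ea ?eb in e1 e2; lia.
}
{ move=> v [[q [_ Hm] <-] [q' [_ Hm'] Hq]].
  case: q q' Hm Hm' Hq => a b [a' b'] Hm Hm'; rewrite /phi /= => [[e1 e2]].
  have ea : a' = a by lia.
  have eb : b' = b by lia.
  by rewrite ea eb in Hm'.
}
{ by move=> q Hq; apply/U_phi.
}
{ case=> x y Hu.
  have Hrot : forall k : 'I_4, U n (c4act k (x, y)).
    move=> k; case: k => [[|[|[|[|k]]]] Hk] //;
    move: Hu; rewrite /c4act /U /Defs.rot /= => Hu;
    rewrite -Hu; ring.
  have uniq : forall q q' (k k' : 'I_4), c4act k (x, y) = phi q -> c4act k' (x, y) = phi q' -> phi q' = phi q.
  {    move=> [a1 b1] [a2 b2] k k'.
    have := @key N x y Hu.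
    case: k => [[|[|[|[|k]]]] Hk] //; case: k' => [[|[|[|[|k']]]] Hk'] //.
    all: rewrite /c4act /phi /= /Defs.rot /= => HH [f1 f2] [g1 g2].
    all: case: HH => [[a [b [ea eb]]]|[[a [b [ea eb]]]|[[a [b [ea eb]]]|[a [b [ea eb]]]]]].
    all: rewrite ?ea ?eb in f1 f2 g1 g2 *; try (exfalso; lia).
    all: apply/eqP; rewrite xpair_eqE; apply/andP; split; apply/eqP; lia.
  }
  have ex : exists q (k : 'I_4), c4act k (x, y) = phi q.
    have := @key N x y Hu.
    case=> [[a [b [-> ->]]]|[[a [b [-> ->]]]|[[a [b [-> ->]]]|[a [b [-> ->]]]]]].
    + by exists (a, b), ord0.
    + exists (- a, - b - 1), (@Ordinal 4 2 isT); rewrite /c4act /phi /= /Defs.rot /=.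
      apply/eqP; rewrite xpair_eqE; apply/andP; split; apply/eqP; lia.
    + exists (- a, b), (@Ordinal 4 1 isT); rewrite /c4act /phi /= /Defs.rot /=.
      apply/eqP; rewrite xpair_eqE; apply/andP; split; apply/eqP; lia.
    + exists (a, - b - 1), (@Ordinal 4 3 isT); rewrite /c4act /phi /= /Defs.rot /=.
      apply/eqP; rewrite xpair_eqE; apply/andP; split; apply/eqP; lia.
  case: ex => q [k Hk].
  exists (phi q); split.
    split; last by exists k.
    exists q => //; apply/U_phi; rewrite -Hk; exact: Hrot.
  move=> v [[q' _ <-] [k' Hk']].
  exact: esym (uniq q q' k k' Hk Hk').
}
Qed.
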